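(* Let $f$ be a function, $x^\star$ one of its global optima with associated $(\nu,\rho)$, let $C>1$, and let $d=d(\nu,C,\rho)$. After a run of \texttt{SequOOL} with budget $n$ (deterministic feedback), the simple regret $r_n=f(x^\star)-f(x(n))$ satisfies: - if $d=0$, then $r_n\le \nu\rho^{\frac1C\lfloor n/\bar\log n\rfloor}$; - if $d>0$, then $r_n\le \nu\exp\!\Big(-\frac1d W\big(\frac{d\log(1/\rho)}{C}\lfloor n/\bar\log n\rfloor\big)\Big)$.
   Context: Let $\mathcal X$ be a set and $f:\mathcal X\to\mathbb R$ a function attaining its supremum; a point $x^\star$ with $f(x^\star)=\sup_{x\in\mathcal X}f(x)$ is a global optimum. Hierarchical partitioning $\mathcal P=\{\mathcal P_{h,i}\}$: - for every depth $h\ge 0$, the cells $\{\mathcal P_{h,i}\}_{1\le i\le I_h}$ form a partition of $\mathcal X$, and $\mathcal P_{0,1}=\mathcal X$; - each cell $\mathcal P_{h,i}$ is partitioned into finitely many children cells of depth $h+1$; - each cell has a fixed representative point $x_{h,i}\in\mathcal P_{h,i}$, and we write $f_{h,i}=f(x_{h,i})$; - for a global optimum $x^\star$, $i^\star_h$ is the index of the unique depth-$h$ cell containing $x^\star$. Local smoothness: a global optimum $x^\star$ has associated $(\nu,\rho)$, with $\nu>0$ and $\rho\in(0,1)$, if for all $h\in\mathbb N$ and all $x\in\mathcal P_{h,i^\star_h}$ we have $f(x)\ge f(x^\star)-\nu\rho^h$. Near-optimality dimension: for $\nu>0$, $C>1$, $\rho\in(0,1)$, let $\mathcal N_h(\epsilon)$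 be the number of depth-$h$ cells $\mathcal P_{h,i}$ with $\sup_{x\in\mathcal P_{h,i}}f(x)\ge f(x^\star)-\epsilon$. Define \[ d(\nu,C,\rho)=\inf\{d'\ge 0:\ \forall h\ge 0,\ \mathcal N_h(3\nu\rho^h)\le C\rho^{-d'h}\}, \] which is assumed finite. Notation: - $\bar\log n=\sum_{t=1}^n 1/t$ (the $n$-th harmonic number); - $W$ is the standard Lambert $W$ function: for $A\ge 0$, $W(A)$ is the unique $z\ge 0$ with $ze^z=A$. Deterministic feedback: evaluating a cell $\mathcal P_{h,i}$ returns $f_{h,i}$ exactly. Opening a cell means evaluating each of its children cells once. \texttt{SequOOL} with budget $n$: set $h_{\max}=\lfloor n/\bar\log n\rfloor$ and open $\mathcal P_{0,1}$. Then, for $h=1,2,\dots,h_{\max}$ in increasing order, open the $\lfloor h_{\max}/h\rfloor$ depth-$h$ cells having the largest values $f_{h,j}$ among the evaluated depth-$h$ cells (or all of them if there are fewer). Finally, output $x(n)$, a representative point $x_{h,i}$ of an evaluated cell maximizing $f_{h,i}$. *)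

(* Defs.v *)
From Stdlib Require Import Reals Lra Lia List Classical ClassicalEpsilon ClassicalDescription.
Import ListNotations.
Open Scope R_scope.

(* \bar log n = sum_{t=1}^n 1/t *)
Fixpoint harmonic (n : nat) : R :=
  match n with
  | O => 0
  | S k => harmonic k + / INR (S k)
  end.

Definition floorN (x : R) : nat := Z.to_nat (Int_part x).

Definition hmax (n : nat) : nat := floorN (INR n / harmonic n).

Definition LambertW (A : R) : R :=
  epsilon (inhabits 0) (fun z => 0 <= z /\ z * exp z = A).

(* Depth-h cells are indexed by i < I h;
   cell h i is the membership predicate of P_{h,i}; rep h i = x_{h,i};
   parent h j is the index of the depth-h cell containing the depth-(h+1)
   cell j (determined by the nesting; given as data for computability). *)
Definition is_hier_partition {X : Type} (I : nat -> nat)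
  (cell : nat -> nat -> X -> Prop) (parent : nat -> nat -> nat)
  (rep : nat -> nat -> X) : Prop :=
  I 0%nat = 1%nat /\
  (forall x, cell 0%nat 0%nat x) /\
  (forall h x, exists! i, (i < I h)%nat /\ cell h i x) /\
  (forall h i, (i < I h)%nat -> cell h i (rep h i)) /\
  (forall h j, (j < I (S h))%nat ->
      (parent h j < I h)%nat /\
      (forall x, cell (S h) j x -> cell h (parent h j) x)).

Definition global_opt {X : Type} (f : X -> R) (xs : X) : Prop :=
  forall x, f x <= f xs.

Definition local_smooth {X : Type} (f : X -> R) (I : nat -> nat)
  (cell : nat -> nat -> X -> Prop) (xs : X) (nu rho : R) : Prop :=
  forall h i x, (i < I h)%nat -> cell h i xs -> cell h i x ->
    f x >= f xs - nu * rho ^ h.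

Fixpoint count_below (P : nat -> Prop) (m : nat) : nat :=
  match m with
  | O => O
  | S k => (count_below P k + if excluded_middle_informative (P k) then 1 else 0)%nat
  end.

Definition cell_sup_ge {X : Type} (f : X -> R) (cell : nat -> nat -> X -> Prop)
  (h i : nat) (L : R) : Prop :=
  exists s, is_lub (fun y => exists x, cell h i x /\ y = f x) s /\ s >= L.

Definition N_h {X : Type} (f : X -> R) (I : nat -> nat)
  (cell : nat -> nat -> X -> Prop) (xs : X) (h : nat) (eps : R) : nat :=
  count_below (fun i => cell_sup_ge f cell h i (f xs - eps)) (I h).

Definition near_opt_admissible {X : Type} (f : X -> R) (I : nat -> nat)
  (cell : nat -> nat -> X -> Prop) (xs : X) (nu C rho : R) (d' : R) : Prop :=
  0 <= d' /\
  forall h, INR (N_h f I cell xs h (3 * nu * rho ^ h)) <= C * Rpower rho (- d' * INR h).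

Definition is_inf (E : R -> Prop) (m : R) : Prop :=
  (forall x, E x -> m <= x) /\ (forall b, (forall x, E x -> b <= x) -> b <= m).

(* d(nu,C,rho) = d  (in particular the infimum is finite) *)
Definition near_opt_dim {X : Type} (f : X -> R) (I : nat -> nat)
  (cell : nat -> nat -> X -> Prop) (xs : X) (nu C rho d : R) : Prop :=
  is_inf (near_opt_admissible f I cell xs nu C rho) d.

Definition children_of (I : nat -> nat) (parent : nat -> nat -> nat)
  (h : nat) (O : list nat) : list nat :=
  filter (fun j => existsb (Nat.eqb (parent h j)) O) (seq 0 (I (S h))).

Definition evaluated (I : nat -> nat) (parent : nat -> nat -> nat)
  (O : nat -> list nat) (h : nat) : list nat :=
  children_of I parent (pred h) (O (pred h)).

(* A run of SequOOL with budget n (ties broken arbitrarily):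
   O h = list of opened depth-h cells (O 0 = root), xn = output x(n). *)
Definition SequOOL_run {X : Type} (f : X -> R) (I : nat -> nat)
  (parent : nat -> nat -> nat) (rep : nat -> nat -> X)
  (n : nat) (O : nat -> list nat) (xn : X) : Prop :=
  let H := hmax n in
  let Ev := evaluated I parent O in
  O 0%nat = [0%nat] /\
  (forall h, (1 <= h <= H)%nat ->
     NoDup (O h) /\ incl (O h) (Ev h) /\
     length (O h) = Nat.min (H / h) (length (Ev h)) /\
     (forall j k, In j (O h) -> In k (Ev h) -> ~ In k (O h) ->
        f (rep h k) <= f (rep h j))) /\
  exists h i, (1 <= h <= S H)%nat /\ In i (Ev h) /\ xn = rep h i /\
    (forall h' i', (1 <= h' <= S H)%nat -> In i' (Ev h') ->
        f (rep h' i') <= f (rep h i)).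

(* Main.v *)
Require Import Defs.
From Stdlib Require Import ZArith Reals List Lra Lia Classical ClassicalEpsilon ClassicalDescription.
Open Scope R_scope.

Lemma exp_mono_le x y : x <= y -> exp x <= exp y.
Proof. intros [H|H]; [left; apply exp_increasing; auto | subst; lra]. Qed.

Lemma count_below_filter (P : nat -> Prop) m :
  count_below P m = length (filter (fun k => if excluded_middle_informative (P k) then true else false) (seq 0 m)).
Proof.
  induction m as [|m IH]; [reflexivity|]. cbn [count_below].
  rewrite seq_S, filter_app, length_app, IH. simpl.
  destruct (excluded_middle_informative (P m)); simpl; lia.
Qed.

Lemma floor_props B : 0 <= B -> INR (floorN B) <= B /\ B < INR (floorN B) + 1.
Proof.
  intros HB. unfold floorN. destruct (base_Int_part B) as [H1 H2].
  assert (Hz : (0 <= Int_part B)%Z).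
  { assert (IZR (Int_part B) > -1) by lra. apply lt_IZR in H. lia. }
  rewrite INR_IZR_INZ, Z2Nat.id by exact Hz. lra.
Qed.

Lemma Rpower_ge1 rho x : 0 < rho < 1 -> x <= 0 -> 1 <= Rpower rho x.
Proof.
  intros [H0 H1] Hx. unfold Rpower. rewrite <- exp_0. apply exp_mono_le.
  assert (ln rho < 0) by (rewrite <- ln_1; apply ln_increasing; lra). nra.
Qed.

Lemma Rpower_anti rho x y : 0 < rho < 1 -> x <= y -> Rpower rho y <= Rpower rho x.
Proof.
  intros [H0 H1] Hx. unfold Rpower. apply exp_mono_le.
  assert (ln rho < 0) by (rewrite <- ln_1; apply ln_increasing; lra). nra.
Qed.

Lemma lambert_spec A : 0 <= A -> 0 <= LambertW A /\ LambertW A * exp (LambertW A) = A.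
Proof.
  intros HA. unfold LambertW. apply epsilon_spec.
  destruct HA as [HA|HA]; [|subst; exists 0; split; [lra|ring]].
  set (g := fun z => z * exp z - A).
  assert (Hc : continuity g).
  { unfold g. apply continuity_minus.
    - apply continuity_mult. apply derivable_continuous, derivable_id.
      apply derivable_continuous, derivable_exp.
    - apply continuity_const. intros a b; auto. }
  destruct (IVT g 0 (A+1) Hc) as [z [Hz1 Hz2]].
  - lra.
  - unfold g. rewrite Rmult_0_l. lra.
  - unfold g. assert (1 <= exp (A+1)) by (pose proof (exp_ineq1_le (A+1)); lra). assert ((A+1)*1 <= (A+1) * exp (A+1)) by (apply Rmult_le_compat_l; lra). lra.
  - exists z. unfold g in Hz2. split; lra.
Qed.
Lemma sup_ge {X : Type} (f : X -> R) I cell parent rep xs h i L :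
  is_hier_partition I cell parent rep -> global_opt f xs ->
  (i < I h)%nat -> L <= f (rep h i) -> cell_sup_ge f cell h i L.
Proof.
  intros Hp Ho Hi HL. destruct Hp as (_&_&_&Hrep&_).
  set (E := fun y => exists x, cell h i x /\ y = f x).
  destruct (completeness E) as [s Hs].
  - exists (f xs). intros y [x [_ ->]]. apply Ho.
  - exists (f (rep h i)). exists (rep h i). auto.
  - exists s. split; auto. destruct Hs as [Hs _].
    assert (f (rep h i) <= s) by (apply Hs; exists (rep h i); auto). lra.
Qed.

Lemma ev_in_seq I parent (O : nat -> list nat) h k :
  In k (evaluated I parent O (S h)) -> (k < I (S h))%nat /\ In (parent h k) (O h).
Proof.
  unfold evaluated, children_of. simpl. rewrite filter_In, in_seq.
  intros [Hk He]. split; [lia|]. apply existsb_exists in He.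
  destruct He as [x [Hx Hb]]. apply Nat.eqb_eq in Hb. subst; auto.
Qed.

Lemma in_ev I parent (O : nat -> list nat) h k :
  (k < I (S h))%nat -> In (parent h k) (O h) -> In k (evaluated I parent O (S h)).
Proof.
  intros Hk Hp. unfold evaluated, children_of. simpl. rewrite filter_In, in_seq.
  split; [lia|]. apply existsb_exists. exists (parent h k). split; auto.
  apply Nat.eqb_refl.
Qed.

Lemma core (X : Type) (f : X -> R) (I : nat -> nat)
  (cell : nat -> nat -> X -> Prop) (parent : nat -> nat -> nat)
  (rep : nat -> nat -> X)
  (Hpart : is_hier_partition I cell parent rep)
  (xs : X) (Hopt : global_opt f xs)
  (nu rho : R) (Hnu : 0 < nu) (Hrho0 : 0 < rho) (Hrho1 : rho < 1)
  (Hsmooth : local_smooth f I cell xs nu rho)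
  (C : R) (HC : 1 < C) (d : R) (Hd0 : 0 <= d)
  (HQ : forall h, INR (N_h f I cell xs h (3 * nu * rho ^ h)) <= C * Rpower rho (- d * INR h))
  (n : nat) (O : nat -> list nat) (xn : X)
  (Hrun : SequOOL_run f I parent rep n O xn)
  (B : R) (HB : 0 <= B)
  (Hcond : forall h, (1 <= h)%nat -> INR h <= B ->
     INR h * C * Rpower rho (- d * INR h) <= INR (hmax n)) :
  f xs - f xn <= nu * Rpower rho B.
Proof.
  set (H := hmax n) in *.
  set (K := floorN B).
  destruct (floor_props B HB) as [HK1 HK2]. fold K in HK1, HK2.
  destruct Hrun as (HO0 & Hstep & h0 & i0 & Hh0 & Hi0 & Hxn & Hmax).
  fold H in Hstep, Hh0, Hmax.
  pose proof Hpart as (HI0 & Hc0 & Huniq & Hrep & Hpar).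
  assert (Hlt : forall h, (1 <= h)%nat -> (h <= K)%nat -> (h < H)%nat /\
             INR h * C * Rpower rho (- d * INR h) <= INR H).
  { intros h H1 H2.
    assert (INR h <= B) by (apply Rle_trans with (INR K); auto; apply le_INR; auto).
    pose proof (Hcond h H1 H0) as Hc.
    assert (1 <= Rpower rho (- d * INR h)).
    { apply Rpower_ge1; [lra|]. pose proof (pos_INR h). nra. }
    assert (1 <= INR h) by (apply (le_INR 1); auto).
    split; auto. apply INR_lt.
    assert (INR h * C * 1 <= INR h * C * Rpower rho (- d * INR h)) by (apply Rmult_le_compat_l; nra).
    nra. }
  assert (Hclaim : forall h, (h <= K)%nat -> forall i, (i < I h)%nat -> cell h i xs -> In i (O h)).
  { induction h as [|h IH]; intros HhK i Hi Hci.
    - rewrite HO0. rewrite HI0 in Hi. left; lia.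
    - destruct (Hpar h i Hi) as [Hp1 Hp2].
      assert (HpO : In (parent h i) (O h)) by (apply IH; auto; lia).
      assert (Hev : In i (evaluated I parent O (S h))) by (apply in_ev; auto).
      destruct (Hlt (S h)) as [HSH Hcnd]; try lia.
      destruct (Hstep (S h)) as (Hnd & Hincl & Hlen & Hbest); [lia|].
      destruct (in_dec Nat.eq_dec i (O (S h))) as [Hin|Hnin]; auto.
      exfalso.
      assert (Hlen2 : (S (length (O (S h))) <= length (evaluated I parent O (S h)))%nat).
      { change (S (length (O (S h)))) with (length (i :: O (S h))).
        apply NoDup_incl_length. constructor; auto.
        intros k [<-|Hk]; auto. }
      assert (HlenO : length (O (S h)) = (H / S h)%nat) by lia.
      assert (Hsm : f (rep (S h) i) >= f xs - nu * rho ^ (S h)).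
      { apply (Hsmooth (S h) i); auto. }
      assert (Hpos : 0 < nu * rho ^ S h) by (apply Rmult_lt_0_compat; auto; apply pow_lt; auto).
      assert (HN : (S (H / S h) <= N_h f I cell xs (S h) (3 * nu * rho ^ S h))%nat).
      { unfold N_h. rewrite count_below_filter. rewrite <- HlenO.
        change (S (length (O (S h)))) with (length (i :: O (S h))).
        apply NoDup_incl_length. constructor; auto.
        intros k Hk. apply filter_In. rewrite in_seq.
        assert (Hk' : In k (evaluated I parent O (S h))) by (destruct Hk as [<-|Hk]; auto).
        destruct (ev_in_seq I parent O h k Hk') as [Hkl _].
        split; [lia|].
        destruct (ClassicalDescription.excluded_middle_informative _) as [_|Hn]; auto.
        exfalso; apply Hn. apply (sup_ge f I cell parent rep xs); auto.
        destruct Hk as [<-|Hk]; [lra|].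
        pose proof (Hbest k i Hk Hev Hnin). lra. }
      apply le_INR in HN. pose proof (HQ (S h)) as HQh.
      assert (Hgt := Nat.mul_succ_div_gt H (S h) ltac:(lia)).
      apply lt_INR in Hgt. rewrite mult_INR in Hgt.
      assert (0 < INR (S h)) by (apply lt_0_INR; lia).
      assert (INR (S h) * INR (S (H / S h)) <= INR (S h) * (C * Rpower rho (- d * INR (S h)))).
      { apply Rmult_le_compat_l; lra. }
      lra. }
  assert (HKH : (K <= H)%nat).
  { destruct K as [|k] eqn:EK; [lia|]. destruct (Hlt (S k)); lia. }
  destruct (Huniq (S K) xs) as [i [[Hi Hci] _]].
  destruct (Hpar K i Hi) as [Hp1 Hp2].
  assert (HpO : In (parent K i) (O K)) by (apply Hclaim; auto).
  assert (Hev : In i (evaluated I parent O (S K))) by (apply in_ev; auto).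
  pose proof (Hmax (S K) i ltac:(lia) Hev) as Hm. rewrite <- Hxn in Hm.
  pose proof (Hsmooth (S K) i (rep (S K) i) Hi Hci (Hrep _ _ Hi)) as Hs.
  assert (rho ^ S K <= Rpower rho B).
  { rewrite <- Rpower_pow by auto. apply Rpower_anti; [lra|].
    rewrite S_INR. lra. }
  assert (nu * rho ^ S K <= nu * Rpower rho B) by (apply Rmult_le_compat_l; lra).
  lra.
Qed.

Lemma ln_mono a b : 0 < a -> a <= b -> ln a <= ln b.
Proof. intros Ha [H|H]; [left; apply ln_increasing; auto|subst; lra]. Qed.

Lemma dim_props (X : Type) (f : X -> R) (I : nat -> nat)
  (cell : nat -> nat -> X -> Prop) (xs : X) (nu C rho d : R)
  (HC : 1 < C) (Hrho0 : 0 < rho) (Hrho1 : rho < 1)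
  (Hd : near_opt_dim f I cell xs nu C rho d) :
  0 <= d /\ forall h, INR (N_h f I cell xs h (3 * nu * rho ^ h)) <= C * Rpower rho (- d * INR h).
Proof.
  destruct Hd as [Hlow Hgl].
  assert (Hne : exists x, near_opt_admissible f I cell xs nu C rho x).
  { apply NNPP. intros Hn. assert (d + 1 <= d); [|lra].
    apply Hgl. intros x Hx. exfalso; apply Hn; eauto. }
  split.
  { apply Hgl. intros x [Hx _]. auto. }
  intros h. set (N := INR _).
  assert (HL : ln rho < 0) by (rewrite <- ln_1; apply ln_increasing; lra).
  destruct (Nat.eq_dec h 0) as [->|Hh].
  { destruct Hne as [x [_ Hx]]. specialize (Hx 0%nat). simpl in *.
    rewrite Rmult_0_r, Rpower_O in * by auto. exact Hx. }
  assert (HP : forall y, 0 < C * Rpower rho y) by (intros y; apply Rmult_lt_0_compat; [lra|apply exp_pos]).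
  destruct (Rle_lt_dec N 0) as [HN|HN]; [pose proof (HP (- d * INR h)); lra|].
  assert (Hhp : 0 < INR h) by (apply lt_0_INR; lia).
  set (D0 := (ln N - ln C) / (INR h * - ln rho)).
  assert (HD0 : D0 <= d).
  { apply Hgl. intros x [_ Hx]. specialize (Hx h). fold N in Hx.
    apply ln_mono in Hx; auto. rewrite ln_mult in Hx by (lra || apply exp_pos).
    unfold Rpower in Hx. rewrite ln_exp in Hx.
    unfold D0. apply Rmult_le_reg_r with (INR h * - ln rho); [nra|].
    unfold Rdiv. rewrite Rmult_assoc, Rinv_l by nra. nra. }
  unfold Rpower.
  replace N with (C * exp (ln N - ln C)).
  2:{ unfold Rminus. rewrite exp_plus, exp_Ropp, !exp_ln by lra. field. lra. }
  apply Rmult_le_compat_l; [lra|]. apply exp_mono_le.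
  unfold D0 in HD0. apply Rmult_le_compat_r with (r := INR h * - ln rho) in HD0; [|nra].
  unfold Rdiv in HD0. rewrite Rmult_assoc, Rinv_l in HD0 by nra. nra.
Qed.

Theorem theorem2 (X : Type) (f : X -> R) (I : nat -> nat)
  (cell : nat -> nat -> X -> Prop) (parent : nat -> nat -> nat)
  (rep : nat -> nat -> X)
  (Hpart : is_hier_partition I cell parent rep)
  (xs : X) (Hopt : global_opt f xs)
  (nu rho : R) (Hnu : 0 < nu) (Hrho0 : 0 < rho) (Hrho1 : rho < 1)
  (Hsmooth : local_smooth f I cell xs nu rho)
  (C : R) (HC : 1 < C)
  (d : R) (Hd : near_opt_dim f I cell xs nu C rho d)
  (n : nat) (Hn : (1 <= n)%nat)
  (O : nat -> list nat) (xn : X)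
  (Hrun : SequOOL_run f I parent rep n O xn) :
  (d = 0 -> f xs - f xn <= nu * Rpower rho (/ C * INR (hmax n))) /\
  (0 < d -> f xs - f xn <=
     nu * exp (- (/ d) * LambertW (d * ln (/ rho) / C * INR (hmax n)))).
Proof.
  destruct (dim_props X f I cell xs nu C rho d HC Hrho0 Hrho1 Hd) as [Hd0 HQ].
  assert (HL : ln rho < 0) by (rewrite <- ln_1; apply ln_increasing; lra).
  rewrite ln_Rinv by auto.
  pose proof (pos_INR (hmax n)) as HH.
  split.
  - intros ->. apply (core X f I cell parent rep Hpart xs Hopt nu rho Hnu Hrho0 Hrho1
      Hsmooth C HC 0 (Rle_refl 0) HQ n O xn Hrun).
    + apply Rmult_le_pos; auto. left; apply Rinv_0_lt_compat; lra.
    + intros h _ Hh. replace (- 0 * INR h) with 0 by ring. rewrite Rpower_O by auto.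
      apply Rmult_le_compat_r with (r := C) in Hh; [|lra].
      rewrite Rmult_comm with (r1 := / C), Rmult_assoc, Rinv_l in Hh by lra. lra.
  - intros Hdp.
    set (A := d * - ln rho / C * INR (hmax n)).
    assert (HA : 0 <= A).
    { unfold A. apply Rmult_le_pos; auto. unfold Rdiv. apply Rmult_le_pos; [nra|].
      left; apply Rinv_0_lt_compat; lra. }
    destruct (lambert_spec A HA) as [Hw0 Hw].
    set (w := LambertW A) in *.
    replace (exp (- / d * w)) with (Rpower rho (w / (d * - ln rho))).
    2:{ unfold Rpower. f_equal. field. split; lra. }
    apply (core X f I cell parent rep Hpart xs Hopt nu rho Hnu Hrho0 Hrho1
      Hsmooth C HC d Hd0 HQ n O xn Hrun).
    + unfold Rdiv. apply Rmult_le_pos; auto. left; apply Rinv_0_lt_compat; nra.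
    + intros h _ Hh.
      set (t := d * INR h * - ln rho).
      assert (Ht0 : 0 <= t) by (unfold t; pose proof (pos_INR h); apply Rmult_le_pos; nra).
      assert (Htw : t <= w).
      { unfold t. apply Rmult_le_compat_r with (r := d * - ln rho) in Hh; [|nra].
        unfold Rdiv in Hh. rewrite Rmult_assoc, Rinv_l in Hh by nra. nra. }
      assert (Hte : t * exp t <= A).
      { rewrite <- Hw. apply Rmult_le_compat; auto. left; apply exp_pos.
        apply exp_mono_le; auto. }
      assert (HR : Rpower rho (- d * INR h) = exp t).
      { unfold Rpower, t. f_equal. ring. }
      rewrite HR. unfold A in Hte.
      assert (Hk : 0 < d * - ln rho / C).
      { unfold Rdiv. apply Rmult_lt_0_compat; [nra|apply Rinv_0_lt_compat; lra]. }
      apply Rmult_le_reg_l with (d * - ln rho / C); auto.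
      replace (d * - ln rho / C * (INR h * C * exp t))
        with (t * exp t) by (unfold t; field; lra).
      lra.
Qed.
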